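(* Let $\Lambda$ denote the von Mangoldt function and let $\varepsilon>0$ be a small number. Then, as $x\to\infty$, \[ \sum_{n\leq x} \Lambda\left( [x/n]^3+2 \right) = a_3 x + O\left( x^{(2+\varepsilon)/3}\log^2 x \right), \] where the density constant is \[ a_3=\sum_{n\geq 1}\frac{\Lambda(n^3+2)}{n(n+1)}\geq 1.002998. \]
   Context: $[t]$ denotes the largest integer not exceeding $t$. The von Mangoldt function is $\Lambda(m)=\log p$ if $m=p^k$ for a prime $p$ and an integer $k\geq 1$, and $\Lambda(m)=0$ otherwise. The sum is over positive integers $n\le x$. *)

(* Defs.v *)
From HB Require Import structures.
From mathcomp Require Import all_boot all_order all_algebra.
From mathcomp Require Import all_classical all_reals all_analysis.
Set Implicit Arguments. Unset Strict Implicit. Unset Printing Implicit Defensive.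
Import Order.TTheory GRing.Theory Num.Theory.
Local Open Scope ring_scope.

(* The sum ranges over primes p <= m admitting such a k <= m;
   there is at most one such p, so the sum is either ln p or 0. *)
Definition vonMangoldt (R : realType) (m : nat) : R :=
  \sum_(p < m.+1 | prime p && [exists k : 'I_m.+1, (0 < k)%N && (m == p ^ k)%N])
     ln (p%:R : R).

Definition floorn (R : realType) (t : R) : nat := Num.truncn t.

Definition Ssum (R : realType) (x : R) : R :=
  \sum_(1 <= n < (floorn x).+1) vonMangoldt R ((floorn (x / n%:R)) ^ 3 + 2)%N.

(* k-th term (k >= 0) of the series a_3 = sum_{n>=1} Lambda(n^3+2)/(n(n+1)),
   with n = k+1 *)
Definition a3_term (R : realType) (k : nat) : R :=
  vonMangoldt R (k.+1 ^ 3 + 2)%N / (k.+1 * k.+2)%:R.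

(* Main.v *)
Require Import Defs.
From HB Require Import structures.
From mathcomp Require Import all_boot all_order all_algebra.
From mathcomp Require Import all_classical all_reals all_analysis.
From Stdlib Require Import Lia.
From mathcomp Require Import zify ring lra.
Import Order.TTheory GRing.Theory Num.Theory numFieldNormedType.Exports.
Local Open Scope classical_set_scope.
Local Open Scope ring_scope.
Lemma vM_ge0 (R : realType) m : 0 <= vonMangoldt R m.
Proof.
rewrite /vonMangoldt; apply: sumr_ge0 => p /andP[pp _].
by apply: ln_ge0; rewrite ler1n prime_gt0.
Qed.

Lemma pp_uniq (m p q k j : nat) : prime p -> prime q -> (0 < k)%N -> (0 < j)%N ->
  m = (p ^ k)%N -> m = (q ^ j)%N -> p = q.
Proof.
move=> pp pq k0 j0 mp mq.
have : (p %| q ^ j)%N by rewrite -mq mp dvdn_exp.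
rewrite Euclid_dvdX // => /andP[pq' _].
by apply/eqP; rewrite -(dvdn_prime2 pp pq).
Qed.

Definition vMP {m} (p : 'I_m.+1) := prime p && [exists k : 'I_m.+1, (0 < k)%N && (m == p ^ k)%N].

Lemma vMP_uniq m (p q : 'I_m.+1) : vMP p -> vMP q -> p = q.
Proof.
move=> /andP[pp /existsP[k /andP[k0 /eqP mk]]] /andP[pq /existsP[j /andP[j0 /eqP mj]]].
by apply: val_inj; exact: (@pp_uniq _ _ _ _ _ pp pq k0 j0 mk mj).
Qed.

Lemma vM_le (R : realType) m : (0 < m)%N -> vonMangoldt R m <= ln (m%:R : R).
Proof.
move=> m0; rewrite /vonMangoldt -/(@vMP m).
case: (pickP (@vMP m)) => [p Pp | none].
- rewrite (bigD1 p) //= big1 ?addr0.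
  + have pp : prime p by case/andP: Pp.
    rewrite ler_ln ?posrE ?ltr0n ?m0 ?prime_gt0 //.
    rewrite ler_nat. by rewrite -ltnS ltn_ord.
  + by move=> q /andP[Pq /eqP []]; apply: vMP_uniq.
- by rewrite big1 ?ln_ge0 // ?ler1n // => i Pi; move: (none i); rewrite /vMP Pi.
Qed.

Lemma vM_prime (R : realType) p : prime p -> vonMangoldt R p = ln (p%:R : R).
Proof.
move=> pp; rewrite /vonMangoldt -/(@vMP p).
have p1 : (1 < p.+1)%N by rewrite ltnS prime_gt0.
have P0 : vMP (Ordinal (ltnSn p)).
  rewrite /vMP /= pp /=; apply/existsP.
  by exists (Ordinal p1); rewrite /= expn1.
rewrite (bigD1 (Ordinal (ltnSn p))) //= big1 ?addr0 //.
by move=> q /andP[Pq /eqP []]; apply: vMP_uniq.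
Qed.

Definition gg (R : realType) (n : nat) : R := (ln (n%:R : R) + 2) / n%:R.

Lemma gg_ge0 (R : realType) n : 0 <= gg R n.
Proof.
rewrite /gg; case: n => [|n]; first by rewrite invr0 mulr0.
by rewrite divr_ge0 // addr_ge0 // ln_ge0 // ler1n.
Qed.

Lemma vM_le3 (R : realType) m : vonMangoldt R (m.+1 ^ 3 + 2) <= 3%:R * ln (m.+2%:R : R).
Proof.
have h0 : (0 < m.+1 ^ 3 + 2)%N by rewrite addn_gt0 orbT.
apply: (le_trans (vM_le R _ h0)).
rewrite mulr_natl -lnXn ?ltr0n // -natrX ler_ln ?posrE ?ltr0n ?expn_gt0 ?addn_gt0 ?orbT //.
rewrite ler_nat !expnS !expn0 !muln1; nia.
Qed.

Lemma a3_term_ge0 (R : realType) k : 0 <= a3_term R k.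
Proof. by rewrite /a3_term divr_ge0 ?vM_ge0. Qed.

Lemma a3_term_tel (R : realType) k : a3_term R k <= 3%:R * (gg R k.+1 - gg R k.+2).
Proof.
rewrite /a3_term /gg.
have e1 : k.+2%:R = k.+1%:R + 1 :> R by rewrite -addn1 natrD.
rewrite natrM e1.
set a : R := k.+1%:R.
have a1 : 1 <= a by rewrite /a ler1n.
have a0 : 0 < a := lt_le_trans ltr01 a1.
have hl : ln (a + 1) - ln a <= 1 / a.
  have -> : ln (a + 1) - ln a = ln (1 + 1 / a).
    rewrite -ln_div ?posrE //; last by lra.
    by congr ln; field; rewrite gt_eqF.
  apply: le_ln1Dx; have : 0 < 1 / a by rewrite divr_gt0.
  move=> h; exact: lt_trans (ltrN10 _) h.
have hv : vonMangoldt R (k.+1 ^ 3 + 2) <= 3%:R * ln (a + 1) by rewrite -e1 vM_le3.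
have ha : 0 < a * (a + 1) by apply: mulr_gt0 => //; lra.
apply: (@le_trans _ _ (3%:R * ln (a + 1) / (a * (a + 1)))).
  by rewrite ler_pM2r ?invr_gt0.
rewrite -subr_ge0.
set la := ln a; set lb := ln (a + 1).
have key : 3%:R * ((la + 2) / a - (lb + 2) / (a + 1)) - 3%:R * lb / (a * (a + 1))
   = 3%:R * (2 - (a + 1) * (lb - la)) / (a * (a + 1)).
  by field; apply/andP; split; rewrite gt_eqF //; lra.
rewrite key; apply: divr_ge0; last exact: ltW.
apply: mulr_ge0 => //; rewrite subr_ge0.
have h1 : (a + 1) * (lb - la) <= (a + 1) * (1 / a) by rewrite ler_pM2l //; lra.
have h2 : 1 / a <= 1 by rewrite ler_pdivrMr // mul1r.
have -> : 2 = (a + 1) * (1 / a) + (1 - 1 / a) by field; rewrite gt_eqF.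
apply: (le_trans h1); rewrite lerDl subr_ge0; exact: h2.
Qed.

Lemma seriesE (R : realType) (u : nat -> R) n : series u n = \sum_(0 <= k < n) u k.
Proof. by []. Qed.

Lemma series_tel (R : realType) M K : (M <= K)%N ->
  series (@a3_term R) K - series (@a3_term R) M <= 3%:R * (gg R M.+1 - gg R K.+1).
Proof.
move=> MK; rewrite !seriesE (@big_cat_nat _ _ _ M 0 K) // ?leq0n /= addrC addrK.
have -> : 3%:R * (gg R M.+1 - gg R K.+1) =
   \sum_(M <= k < K) ((- (3%:R * gg R k.+2)) - (- (3%:R * gg R k.+1))).
  by rewrite (telescope_sumr (fun k => - (3%:R * gg R k.+1)) MK) /=; ring.
apply: ler_sum => k _; rewrite opprK addrC -mulrBr; exact: a3_term_tel.
Qed.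

Lemma series_ub (R : realType) n : series (@a3_term R) n <= 3%:R * gg R 1.
Proof.
have := @series_tel R 0 n (leq0n n).
rewrite [series _ 0]seriesE big_geq // subr0 => h; apply: (le_trans h).
by rewrite ler_pM2l ?ltr0n // gerBl gg_ge0.
Qed.

Lemma series_cvg (R : realType) : cvgn (series (@a3_term R)).
Proof.
apply: nondecreasing_is_cvgn.
  by apply: nondecreasing_series => n _ _; exact: a3_term_ge0.
exists (3%:R * gg R 1) => _ [n _ <-]; exact: series_ub.
Qed.

Definition a3 (R : realType) : R := limn (series (@a3_term R)).

Lemma a3_ge (R : realType) M : series (@a3_term R) M <= a3 R.
Proof.
apply: nondecreasing_cvgn_le; last exact: series_cvg.
by apply: nondecreasing_series => n _ _; exact: a3_term_ge0.
Qed.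

Lemma a3_le (R : realType) M : a3 R <= series (@a3_term R) M + 3%:R * gg R M.+1.
Proof.
apply: limr_le; first exact: series_cvg.
exists M => // K /= MK.
have := @series_tel R _ _ MK.
have := gg_ge0 R K.+1.
move=> h1 h2.
rewrite -lerBlDl; apply: (le_trans h2).
by rewrite ler_pM2l ?ltr0n // gerBl.
Qed.

Lemma sum29 (R : realType) :
  a3_term R 0 + a3_term R 2 + a3_term R 4 + a3_term R 28 <= series (@a3_term R) 29.
Proof.
rewrite seriesE (bigID (fun k => k \in [:: 0; 2; 4; 28]%N)) /=.
rewrite -[X in X <= _]addr0; apply: lerD; last first.
  by apply: sumr_ge0 => i _; exact: a3_term_ge0.
rewrite big_mkcond /= unlock /=.
by rewrite !add0r !addr0 !addrA.
Qed.

Definition P6 {R : realType} (s : R) := s - s^+2/2 + s^+3/3 - s^+4/4 + s^+5/5 - s^+6/6.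
Definition h6 {R : realType} (z : R) := ln z - P6 (z - 1).
Lemma h6_der {R : realType} (z : R) : 0 < z -> is_derive z 1 h6 (z^-1 - (1 - (z-1) + (z-1)^+2 - (z-1)^+3 + (z-1)^+4 - (z-1)^+5)).
Proof.
move=> z0; rewrite /h6 /P6.
apply: trigger_derive.
apply: is_deriveB; first exact: is_derive1_ln.
rewrite /= !subr0 !scaler1 !scaler0 !add0r /GRing.scale /=.
by field; rewrite gt_eqF.
Qed.
Lemma ln_lb {R : realType} (t : R) : 0 <= t -> P6 t <= ln (1 + t).
Proof.
move=> t0.
have := @ger0_derive1_ndecr R h6 1 (1 + t).
move=> /(_ _ _ _ 1 (1+t)) H.
have : h6 1 <= h6 (1 + t).
  apply: H.
  - move=> z; rewrite in_itv /= => /andP[z1 _].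
    by have [] := h6_der _ (lt_trans ltr01 z1).
  - move=> z; rewrite in_itv /= => /andP[z1 _].
    have z0 : 0 < z := lt_trans ltr01 z1.
    rewrite derive1E; have [_ ->] := h6_der _ z0.
    have -> : z^-1 - (1 - (z-1) + (z-1)^+2 - (z-1)^+3 + (z-1)^+4 - (z-1)^+5) = (z-1)^+6 / z.
      by field; rewrite gt_eqF.
    by rewrite divr_ge0 ?exprn_ge0 ?subr_ge0 ?ltW.
  - apply: derivable_within_continuous => z; rewrite in_itv /= => /andP[z1 _].
    by have [] := h6_der _ (lt_le_trans ltr01 z1).
  - by [].
  - by rewrite lerDl.
  - by [].
rewrite /h6 ln1 [1 + t - 1]addrC addKr /P6.
rewrite subrr !expr0n /= !mul0r; lra.
Qed.

Definition lN {R : realType} (n : nat) : R := ln (n%:R : R).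

Lemma lNM (R : realType) a b : (0 < a)%N -> (0 < b)%N -> @lN R (a * b) = lN a + lN b.
Proof. by move=> a0 b0; rewrite /lN natrM lnM ?posrE ?ltr0n. Qed.

Lemma lNX (R : realType) a n : (0 < a)%N -> @lN R (a ^ n) = n%:R * lN a.
Proof. by move=> a0; rewrite /lN natrX lnXn ?ltr0n // mulr_natl. Qed.

Lemma lN1p (R : realType) b c : (0 < b)%N ->
  P6 (c%:R / b%:R : R) <= lN (b + c) - lN b.
Proof.
move=> b0; have bR : (0 : R) < b%:R by rewrite ltr0n.
have -> : @lN R (b + c) - lN b = ln (1 + c%:R / b%:R).
  rewrite /lN -ln_div ?posrE ?ltr0n ?addn_gt0 ?b0 //.
  by congr ln; rewrite natrD; field; rewrite gt_eqF.
by apply: ln_lb; rewrite divr_ge0.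
Qed.

Lemma fin (R : realType) (l2 l3 l5 l7 l29 l127 lbig : R) :
  P6 (1%:R / 15%:R) <= 4%:R * l2 - (l3 + l5) ->
  P6 (1%:R / 24%:R) <= 2%:R * l5 - (3%:R * l2 + l3) ->
  P6 (1%:R / 80%:R) <= 4%:R * l3 - (4%:R * l2 + l5) ->
  P6 (2%:R / 27%:R) <= l29 - 3%:R * l3 ->
  P6 (1%:R / 48%:R) <= 2%:R * l7 - (4%:R * l2 + l3) ->
  P6 (1%:R / 126%:R) <= l127 - (l2 + (2%:R * l3 + l7)) ->
  P6 (2%:R / 24389%:R) <= lbig - 3%:R * l29 ->
  (1002998%:R / 1000000%:R : R) <= l3 / 2%:R + l29 / 12%:R + l127 / 30%:R + lbig / 870%:R.
Proof. rewrite /P6. lra. Qed.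

Lemma a3_num (R : realType) : (1002998%:R / 1000000%:R : R) <= a3 R.
Proof.
apply: le_trans (a3_ge R 29); apply: le_trans (sum29 R).
have t0 : a3_term R 0 = lN 3 / 2%:R.
  by rewrite /a3_term vM_prime.
have t2 : a3_term R 2 = lN 29 / 12%:R.
  by rewrite /a3_term vM_prime.
have t4 : a3_term R 4 = lN 127 / 30%:R.
  by rewrite /a3_term vM_prime.
have e24391 : (28.+1 ^ 3 + 2 = 24391)%N by [].
have e870 : (28.+1 * 28.+2 = 870)%N by [].
have t28 : a3_term R 28 = lN 24391 / 870%:R.
  by rewrite /a3_term e24391 e870 vM_prime.
rewrite t0 t2 t4 t28.
have F1 := lN1p R 15 1 isT.
have F2 := lN1p R 24 1 isT.
have F3 := lN1p R 80 1 isT.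
have F4 := lN1p R 27 2 isT.
have F5 := lN1p R 48 1 isT.
have F6 := lN1p R 126 1 isT.
have F7 := lN1p R 24389 2 isT.
have E16 : @lN R 16 = 4%:R * lN 2 by rewrite -lNX.
have E15 : @lN R 15 = lN 3 + lN 5 by rewrite -lNM.
have E25 : @lN R 25 = 2%:R * lN 5 by rewrite -lNX.
have E24 : @lN R 24 = 3%:R * lN 2 + lN 3 by rewrite -lNX // -lNM.
have E81 : @lN R 81 = 4%:R * lN 3 by rewrite -lNX.
have E80 : @lN R 80 = 4%:R * lN 2 + lN 5 by rewrite -lNX // -lNM.
have E27 : @lN R 27 = 3%:R * lN 3 by rewrite -lNX.
have E49 : @lN R 49 = 2%:R * lN 7 by rewrite -lNX.
have E48 : @lN R 48 = 4%:R * lN 2 + lN 3 by rewrite -lNX // -lNM.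
have E126 : @lN R 126 = lN 2 + (2%:R * lN 3 + lN 7) by rewrite -lNX // -lNM // -lNM.
have E24389 : @lN R 24389 = 3%:R * lN 29 by rewrite -lNX.
move: F1 F2 F3 F4 F5 F6 F7.
have E24391 : @lN R (24389 + 2) = lN 24391 by [].
rewrite /P6 E24391 E16 E15 E25 E24 E81 E80 E27 E49 E48 E126 E24389.
exact: fin.
Qed.

Definition fm (R : realType) (m : nat) : R := vonMangoldt R (m ^ 3 + 2)%N.

Lemma sum_ind (R : realType) (c : R) K X : (K <= X)%N ->
  \sum_(1 <= n < X.+1) (if (n <= K)%N then c else 0) = c *+ K.
Proof.
move=> KX; rewrite (@big_cat_nat _ _ _ K.+1) ?ltnS //=.
rewrite [Y in _ + Y]big_nat_cond [Y in _ + Y]big1 ?addr0; last first.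
  by move=> n /andP[/andP[Kn _] _]; rewrite leqNgt Kn.
rewrite (@eq_big_nat _ _ _ _ _ _ (fun _ => c)); last first.
  by move=> n /andP[_ nK]; rewrite ltnS in nK; rewrite nK.
by rewrite sumr_const_nat subn1.
Qed.

Lemma cnt_ge (R : realType) X j : (0 < j)%N ->
  \sum_(1 <= n < X.+1) ((((j <= X %/ n)%N) : nat)%:R : R) = (X %/ j)%:R.
Proof.
move=> j0; rewrite -(@sum_ind R 1 (X %/ j) X) ?leq_div //.
apply: eq_big_nat => n /andP[n1 _].
by rewrite leq_divRL // leq_divRL // mulnC; case: (n * j <= X)%N.
Qed.

Lemma cnt_eq (R : realType) X m : (0 < m)%N ->
  \sum_(1 <= n < X.+1) ((((X %/ n == m)%N) : nat)%:R : R) = (X %/ m)%:R - (X %/ m.+1)%:R.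
Proof.
move=> m0; rewrite -cnt_ge // -cnt_ge // -sumrB; apply: eq_bigr => n _.
case: (ltngtP (X %/ n) m) => h.
- by rewrite subrr.
- by rewrite subrr.
- by rewrite subr0.
Qed.

Lemma divn_approx (R : realType) X m : (0 < m)%N ->
  ((X %/ m)%:R : R) <= X%:R / m%:R /\ (X%:R / m%:R : R) < (X %/ m)%:R + 1.
Proof.
move=> m0; have mR : (0 : R) < m%:R by rewrite ltr0n.
split.
  by rewrite ler_pdivlMr // -natrM ler_nat leq_trunc_div.
by rewrite ltr_pdivrMr // natr1 -natrM ltr_nat ltn_ceil.
Qed.

Lemma cerr (R : realType) X k :
  `| (((X %/ k.+1)%:R - (X %/ k.+2)%:R : R) - X%:R / (k.+1 * k.+2)%:R) | <= 1.
Proof.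
have [a1 a2] := divn_approx R X _ (ltn0Sn k).
have [b1 b2] := divn_approx R X _ (ltn0Sn k.+1).
have e : (X%:R / (k.+1 * k.+2)%:R : R) = X%:R / k.+1%:R - X%:R / k.+2%:R.
  rewrite natrM -[k.+2]addn1 natrD.
  have : (0 : R) < k.+1%:R by rewrite ltr0n.
  by move=> h; field; rewrite !gt_eqF //; apply: ltr_wpDr.
rewrite e; move: a1 a2 b1 b2.
move: (X%:R / k.+1%:R : R) (X%:R / k.+2%:R : R) ((X %/ k.+1)%:R : R) ((X %/ k.+2)%:R : R).
move=> u v p q *; rewrite ler_norml; apply/andP; split; lra.
Qed.

Lemma inner (R : realType) X M n : (0 < n)%N -> (n <= X)%N ->
  (if (X %/ n <= M)%N then fm R (X %/ n) else 0) =
  \sum_(1 <= m < M.+1) fm R m * ((((X %/ n == m)%N) : nat)%:R : R).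
Proof.
move=> n0 nX; case: ifP => h.
- have v0 : (0 < X %/ n)%N by rewrite divn_gt0.
  rewrite (bigD1_seq (X %/ n)%N) /= ?mem_index_iota ?iota_uniq ?v0 ?ltnS ?h //.
  rewrite eqxx mulr1 big1_seq ?addr0 // => m /andP[hm _].
  by rewrite eq_sym (negbTE hm) mulr0.
- rewrite big1_seq // => m /andP[_]; rewrite mem_index_iota => /andP[_ mM].
  rewrite ltnS in mM.
  have -> : (X %/ n == m)%N = false.
    by apply/negbTE; apply: contraFN h => /eqP ->.
  by rewrite mulr0.
Qed.

Lemma fm_ge0 (R : realType) m : 0 <= fm R m.
Proof. exact: vM_ge0. Qed.

Lemma core (R : realType) (X M : nat) (B : R) : (0 < M)%N -> (M <= X)%N -> 0 <= B ->
  (forall m, (0 < m)%N -> (m <= X)%N -> fm R m <= B) ->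
  `| \sum_(1 <= n < X.+1) fm R (X %/ n)%N - X%:R * series (@a3_term R) M |
     <= (M%:R + (X %/ M.+1)%:R) * B.
Proof.
move=> M0 MX B0 hB.
rewrite (bigID (fun n => (X %/ n <= M)%N)) /=.
set S1 := \sum_(1 <= n < X.+1 | (X %/ n <= M)%N) _.
set S2 := \sum_(1 <= n < X.+1 | ~~ (X %/ n <= M)%N) _.
have S2ge : 0 <= S2 by apply: sumr_ge0 => n _; exact: fm_ge0.
have S2le : S2 <= (X %/ M.+1)%:R * B.
  rewrite /S2 big_mkcond /=.
  apply: (@le_trans _ _ (\sum_(1 <= n < X.+1) (if (n <= X %/ M.+1)%N then B else 0))).
    apply: ler_sum_nat => n /andP[n1 nX]; rewrite ltnS in nX.
    case: ifP => h; last by case: ifP.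
    rewrite -ltnNge in h.
    have -> : (n <= X %/ M.+1)%N by rewrite leq_divRL // mulnC -leq_divRL.
    apply: hB; last exact: leq_div.
    exact: leq_ltn_trans (leq0n M) h.
  by rewrite sum_ind ?leq_div // mulr_natl.
have S1E : S1 = \sum_(0 <= k < M) fm R k.+1 *
     \sum_(1 <= n < X.+1) ((((X %/ n == k.+1)%N) : nat)%:R : R).
  rewrite /S1 big_mkcond /=.
  rewrite (@eq_big_nat _ _ _ _ _ _ (fun n => \sum_(1 <= m < M.+1) fm R m * ((((X %/ n == m)%N) : nat)%:R : R))); last first.
    by move=> n /andP[n1 nX]; rewrite ltnS in nX; exact: inner.
  rewrite exchange_big_nat /= big_add1 /=.
  by apply: eq_bigr => k _; rewrite mulr_sumr.
have sE : X%:R * series (@a3_term R) M =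
   \sum_(0 <= k < M) fm R k.+1 * (X%:R / (k.+1 * k.+2)%:R).
  rewrite seriesE mulr_sumr; apply: eq_bigr => k _.
  by rewrite /a3_term mulrCA.
have S1le : `|S1 - X%:R * series (@a3_term R) M| <= M%:R * B.
  rewrite S1E sE -sumrB.
  apply: (le_trans (ler_norm_sum _ _ _)).
  apply: (@le_trans _ _ (\sum_(0 <= k < M) B)); last by rewrite sumr_const_nat subn0 mulr_natl.
  apply: ler_sum_nat => k /andP[_ kM].
  rewrite -mulrBr normrM ger0_norm ?fm_ge0 // cnt_eq //.
  rewrite -[X in _ <= X]mulr1; apply: ler_pM; rewrite ?fm_ge0 ?normr_ge0 ?cerr //.
  by apply: hB => //; apply: leq_trans kM MX.
rewrite addrAC; apply: (le_trans (ler_normD _ _)).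
by rewrite mulrDl (ger0_norm S2ge); apply: lerD.
Qed.


Lemma floor_div (R : realType) (x : R) n : 0 <= x -> (0 < n)%N ->
  floorn (x / n%:R) = (floorn x %/ n)%N.
Proof.
move=> x0 n0; rewrite /floorn.
have nR : (0 : R) < n%:R by rewrite ltr0n.
have [h1 h2] := andP (truncn_itv x0).
apply: truncn_def; apply/andP; split.
  rewrite ler_pdivlMr // -natrM; apply: le_trans h1.
  by rewrite ler_nat leq_trunc_div.
rewrite ltr_pdivrMr // -natrM; apply: (lt_le_trans h2).
by rewrite ler_nat ltn_ceil.
Qed.

Lemma Ssum_eq (R : realType) (x : R) : 0 <= x ->
  Ssum x = \sum_(1 <= n < (floorn x).+1) fm R (floorn x %/ n)%N.
Proof.
move=> x0; rewrite /Ssum; apply: eq_big_nat => n /andP[n1 _].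
by rewrite floor_div.
Qed.

Lemma ln2_ge (R : realType) : P6 (1 : R) <= ln (2 : R).
Proof. have := @ln_lb R 1 ler01. by rewrite (_ : 1 + 1 = 2). Qed.

Lemma lnx_ge1 (R : realType) (x : R) : 8 <= x -> 1 <= ln x.
Proof.
move=> x8.
have h8 : ln (8 : R) = 3%:R * ln 2.
  by rewrite (_ : 8 = 2 ^+ 3) ?lnXn ?mulr_natl //; rewrite exprS expr2; lra.
have : ln (8 : R) <= ln x by rewrite ler_ln ?posrE //; lra.
have := ln2_ge R; rewrite /P6 h8 => h1 h2.
lra.
Qed.

Theorem theorem1p4 (R : realType) :
  exists a3 : R,
    series (@a3_term R) @ \oo --> a3 /\
    (1002998%:R / 1000000%:R : R) <= a3 /\
    (forall eps : R, 0 < eps ->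
       exists C : R, exists X0 : R, forall x : R, X0 <= x ->
         `| Ssum x - a3 * x | <= C * (x `^ ((2 + eps) / 3)) * (ln x) ^+ 2).
Proof.
exists (a3 R); split; first exact: series_cvg.
split; first exact: a3_num.
move=> eps eps0.
exists (24%:R + a3 R), 8 => x x8.
have x0 : 0 < x by lra.
have x1 : 1 <= x by lra.
have a0 : 0 <= a3 R.
  by have := a3_ge R 0; rewrite seriesE big_geq.
set a := a3 R.
set y := x `^ (3^-1).
have y0 : 0 <= y := powR_ge0 _ _.
have y3 : y ^+ 3 = x.
  rewrite -powR_mulrn // -powRrM mulVf ?powRr1 ?ltW //.
have y1 : 1 <= y.
  rewrite leNgt; apply/negP => hy.
  have : y ^+ 3 < 1 by rewrite exprn_ilt1.
  by rewrite y3; lra.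
set P := x `^ ((2 + eps) / 3).
have Y2 : y ^+ 2 <= P.
  rewrite -powR_mulrn // -powRrM /P; apply: ler_powR => //.
  rewrite ler_pdivlMr //; last by lra.
set X := Num.truncn x.
have [hX1 hX2] := andP (truncn_itv (ltW x0)).
rewrite -natr1 -/X in hX2; rewrite -/X in hX1.
set M := Num.truncn (y ^+ 2).
have [hM1 hM2] := andP (truncn_itv (exprn_ge0 2 y0)).
rewrite -natr1 -/M in hM2; rewrite -/M in hM1.
have y2x : y ^+ 2 <= x.
  rewrite -[Z in _ <= Z]y3 [Z in _ <= Z]exprS; apply: ler_peMl; [exact: exprn_ge0 | exact: y1].
have M0 : (0 < M)%N by rewrite truncn_gt0 exprn_ege1.
have MX : (M <= X)%N by apply: le_truncn.
set L := ln (x + 1).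
have L0 : 0 <= L by rewrite ln_ge0 //; lra.
have hB : forall m, (0 < m)%N -> (m <= X)%N -> fm R m <= 3%:R * L.
  move=> [//|m] _ mX.
  apply: (le_trans (vM_le3 R m)); rewrite ler_pM2l ?ltr0n //.
  have hm : m.+1%:R <= x by apply: le_trans hX1; rewrite ler_nat.
  rewrite ler_ln ?posrE ?ltr0n //; last by lra.
  by rewrite -natr1; lra.
have core1 := @core R X M (3%:R * L) M0 MX (mulr_ge0 (ler0n _ 3) L0) hB.
have Mp : (0 : R) < M.+1%:R by rewrite ltr0n.
have K_le : ((X %/ M.+1)%:R : R) <= y.
  have hR : ((X %/ M.+1)%:R : R) * M.+1%:R <= x.
    by apply: le_trans hX1; rewrite -natrM ler_nat leq_trunc_div.
  rewrite -(ler_pM2r Mp); apply: (le_trans hR).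
  rewrite -y3 exprSr mulrC ler_pM2l; last by lra.
  by rewrite -natr1 ltW.
have XM : (X%:R : R) / M.+1%:R <= y.
  rewrite ler_pdivrMr //; apply: (le_trans hX1).
  rewrite -y3 exprSr mulrC ler_pM2l; last by lra.
  by rewrite -natr1 ltW.
have tail := a3_le R M.
have sle := a3_ge R M.
have tailX : X%:R * (a - series (@a3_term R) M) <= 3%:R * y * (L + 2).
  apply: (@le_trans _ _ (X%:R * (3%:R * gg R M.+1))).
    by rewrite ler_wpM2l // lerBlDl.
  have -> : X%:R * (3%:R * gg R M.+1) = 3%:R * (X%:R / M.+1%:R * (ln M.+1%:R + 2)).
    by rewrite /gg; ring.
  rewrite -[Z in _ <= Z]mulrA ler_pM2l ?ltr0n //; apply: ler_pM => //.
    by rewrite addr_ge0 // ln_ge0 // ler1n.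
  rewrite lerD2r ler_ln ?posrE ?ltr0n //; last by lra.
  rewrite -natr1 lerD2r; apply: (le_trans _ hX1); by rewrite ler_nat.
rewrite (@Ssum_eq R x (ltW x0)) /floorn -/X.
set S := \sum_(1 <= n < X.+1) _.
set s := series (@a3_term R) M in core1 tail sle tailX.
have main : `|S - a * x| <= (y ^+ 2 + y) * (3%:R * L) + 3%:R * y * (L + 2) + a.
  have -> : S - a * x = (S - X%:R * s) - (X%:R * (a - s) + a * (x - X%:R)) by ring.
  apply: (le_trans (ler_normB _ _)).
  have h1 : 0 <= X%:R * (a - s) by rewrite mulr_ge0 // subr_ge0.
  have h2 : 0 <= a * (x - X%:R) by rewrite mulr_ge0 // subr_ge0.
  rewrite (ger0_norm (addr_ge0 h1 h2)) addrA.
  have h3 : a * (x - X%:R) <= a by rewrite ler_piMr //; lra.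
  have h4 : (M%:R + (X %/ M.+1)%:R) * (3%:R * L) <= (y ^+ 2 + y) * (3%:R * L).
    by rewrite ler_wpM2r ?mulr_ge0 // lerD.
  lra.
apply: (le_trans main).
set Lx := ln x.
have Lx1 : 1 <= Lx by exact: lnx_ge1.
have LL : L <= 2 * Lx.
  have e2 : ln (x ^+ 2) = ln x *+ 2 := lnXn 2 x0.
  have : L <= ln (x ^+ 2).
    rewrite /L ler_ln ?posrE ?exprn_gt0 //; last by lra.
    rewrite expr2; nra.
  rewrite e2 mulr2n /Lx; lra.
set y2 := y ^+ 2 in Y2 y2x main |- *.
have yy2 : y <= y2 by rewrite /y2 expr2 ler_peMr.
have y21 : 1 <= y2 by lra.
have f1 : y * L <= y2 * (2 * Lx) by apply: ler_pM.
have f2 : y2 * L <= y2 * (2 * Lx) by rewrite ler_wpM2l //; lra.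
have f4 : 1 <= y2 * Lx by apply: mulr_ege1.
have f3 : y <= y2 * Lx by apply: le_trans yy2 _; apply: ler_peMr => //; lra.
have f5 : a <= a * (y2 * Lx) by apply: ler_peMr.
have f6 : y2 * Lx <= P * Lx ^+ 2.
  apply: ler_pM => //; try lra.
  by rewrite expr2 ler_peMr //; lra.
have f7 : a * (y2 * Lx) <= a * (P * Lx ^+ 2) by rewrite ler_wpM2l.
lra.
Qed.
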